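(* Let $\Gamma_1:[0,1]\to\mathbb{R}^{1\times n}$ be the solution of $\Gamma_1''(x)=\varepsilon_1^{-1}\Gamma_1(x)A$, $\Gamma_1(0)=\Gamma_0$, $\Gamma_1'(0)=0$. The first-order hyperbolic system on $\mathcal{T}$ \begin{align*} \sqrt{\varepsilon_1}\partial_xk_{11}+\sqrt{\varepsilon_1}\partial_yk_{11}&=\check k_{11}, & \sqrt{\varepsilon_1}\partial_xk_{12}+\sqrt{\varepsilon_2}\partial_yk_{12}&=\check k_{12},\\ \sqrt{\varepsilon_1}\partial_x\check k_{11}-\sqrt{\varepsilon_1}\partial_y\check k_{11}&=0, & \sqrt{\varepsilon_1}\partial_x\check k_{12}-\sqrt{\varepsilon_2}\partial_y\check k_{12}&=0, \end{align*} with boundary conditions \begin{align*} k_{11}(x,0)&=\frac{a\varepsilon_2}{\varepsilon_1(a\varepsilon_2+\sqrt{\varepsilon_1\varepsilon_2})}\int_0^x\big[\sqrt{\varepsilon_1}\check k_{11}(y,0)+\sqrt{\varepsilon_2}\check k_{12}(y,0)-\Gamma_1(y)B\big]dy,\\ k_{12}(x,0)&=\frac{1}{a\varepsilon_2+\sqrt{\varepsilon_1\varepsilon_2}}\int_0^x\big[\sqrt{\varepsilon_1}\check k_{11}(y,0)+\sqrt{\varepsilon_2}\check k_{12}(y,0)-\Gamma_1(y)B\big]dy,\\ k_{12}(x,x)&=0,\qquad \check k_{11}(x,x)=0,\qquad \check k_{12}(x,x)=0, \end{align*} admits a unique solution (in the sense of integration along characteristics) with $k_{11},k_{12},\check k_{11},\check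 k_{12}\in C(\mathcal{T})$.
   Context: Fix $\varepsilon>0$, $y_0\in(-1,0)$; $\varepsilon_1=\varepsilon/(1+y_0)^2$, $\varepsilon_2=\varepsilon/(1-y_0)^2$ (so $\varepsilon_1>\varepsilon_2>0$), $a=(1+y_0)/(1-y_0)\in(0,1)$. $A\in\mathbb{R}^{n\times n}$, $B\in\mathbb{R}^{n\times1}$, $\Gamma_0\in\mathbb{R}^{1\times n}$. $\mathcal{T}=\{(x,y):0\le y\le x\le1\}$. *)

(* Defs.v *)
From Stdlib Require Import Reals Lra.
Open Scope R_scope.

Fixpoint rsum (n : nat) (f : nat -> R) : R :=
  match n with O => 0 | S m => rsum m f + f m end.

Definition eps1 (eps y0 : R) : R := eps / (1 + y0) ^ 2.
Definition eps2 (eps y0 : R) : R := eps / (1 - y0) ^ 2.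
Definition acoef (y0 : R) : R := (1 + y0) / (1 - y0).

Definition InT (x y : R) : Prop := 0 <= y /\ y <= x /\ x <= 1.

Definition int_eq (f : R -> R) (a b v : R) : Prop :=
  exists pr : Riemann_integrable f a b, RiemannInt pr = v.

Definition cont_on_T (k : R -> R -> R) : Prop :=
  forall x y, InT x y -> forall e, 0 < e -> exists d, 0 < d /\
    forall x' y', InT x' y' -> Rabs (x' - x) < d -> Rabs (y' - y) < d ->
      Rabs (k x' y' - k x y) < e.

(* k solves  lam * d_x k + mu * d_y k = f  in the sense of integration along
   characteristics: along every characteristic segment in T,
   k(P) - k(P - t (lam,mu)) = int_0^t f(P - s (lam,mu)) ds. *)
Definition char_sol (lam mu : R) (k f : R -> R -> R) : Prop :=
  forall x y t, 0 <= t -> InT x y -> InT (x - t * lam) (y - t * mu) ->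
    int_eq (fun s => f (x - s * lam) (y - s * mu)) 0 t
           (k x y - k (x - t * lam) (y - t * mu)).

(* Gamma1 : row vector (components i < n), solution of
   Gamma1'' = eps1^{-1} Gamma1 A, Gamma1(0) = Gamma0, Gamma1'(0) = 0 on [0,1]. *)
Definition Gamma1_sol (n : nat) (A : nat -> nat -> R) (G0 : nat -> R) (e1 : R)
  (G1 : R -> nat -> R) : Prop :=
  exists dG1 : R -> nat -> R,
    (forall i, (i < n)%nat -> G1 0 i = G0 i /\ dG1 0 i = 0) /\
    (forall i, (i < n)%nat -> forall x, 0 <= x <= 1 ->
       derivable_pt_lim (fun z => G1 z i) x (dG1 x i) /\
       derivable_pt_lim (fun z => dG1 z i) x
         (/ e1 * rsum n (fun j => G1 x j * A j i))).

Definition is_solution (eps y0 : R) (n : nat) (B : nat -> R) (G1 : R -> nat -> R)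
  (k11 k12 c11 c12 : R -> R -> R) : Prop :=
  let e1 := eps1 eps y0 in
  let e2 := eps2 eps y0 in
  let a := acoef y0 in
  let I := fun y => sqrt e1 * c11 y 0 + sqrt e2 * c12 y 0
                    - rsum n (fun j => G1 y j * B j) in
  cont_on_T k11 /\ cont_on_T k12 /\ cont_on_T c11 /\ cont_on_T c12 /\
  char_sol (sqrt e1) (sqrt e1) k11 c11 /\
  char_sol (sqrt e1) (sqrt e2) k12 c12 /\
  char_sol (sqrt e1) (- sqrt e1) c11 (fun _ _ => 0) /\
  char_sol (sqrt e1) (- sqrt e2) c12 (fun _ _ => 0) /\
  (forall x, 0 <= x <= 1 -> exists v, int_eq I 0 x v /\
     k11 x 0 = a * e2 / (e1 * (a * e2 + sqrt (e1 * e2))) * v /\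
     k12 x 0 = 1 / (a * e2 + sqrt (e1 * e2)) * v) /\
  (forall x, 0 <= x <= 1 -> k12 x x = 0 /\ c11 x x = 0 /\ c12 x x = 0).

(* Main.v *)
Require Import Defs.
From Stdlib Require Import Reals Lra Lia.
Open Scope R_scope.

Lemma int_zero_val f t v : 0 <= t -> (forall s, 0 < s < t -> f s = 0) ->
  int_eq f 0 t v -> v = 0.
Proof.
  intros Ht Hf [pr Hv]. rewrite <- Hv.
  transitivity (RiemannInt (RiemannInt_P14 0 t 0)).
  - apply RiemannInt_P18; auto.
  - rewrite RiemannInt_P15. ring.
Qed.

Lemma int_zero t : int_eq (fun _ => 0) 0 t 0.
Proof.
  exists (RiemannInt_P14 0 t 0). exact (eq_trans (RiemannInt_P15 _) (Rmult_0_l _)).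
Qed.

Lemma int_uniq f g u v w : 0 <= u -> int_eq f 0 u v -> int_eq g 0 u w ->
  (forall s, 0 < s < u -> f s = g s) -> v = w.
Proof.
  intros Hu [p1 H1] [p2 H2] Hfg. rewrite <- H1, <- H2.
  apply RiemannInt_P18; auto.
Qed.

Lemma prim_facts f : (forall x, 0 <= x <= 1 -> continuity_pt f x) ->
  exists V, V 0 = 0 /\ forall u, 0 <= u <= 1 -> int_eq f 0 u (V u) /\ continuity_pt V u.
Proof.
  intros C0.
  assert (h : 0 <= 1) by lra.
  exists (primitive h (FTC_P1 h C0)). split.
  - unfold primitive. destruct (Rle_dec 0 0) as [r|n]; [|lra].
    destruct (Rle_dec 0 1) as [r0|n]; [|lra]. apply RiemannInt_P9.
  - intros u Hu. split.
    + unfold primitive. destruct (Rle_dec 0 u) as [r|n]; [|lra].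
      destruct (Rle_dec u 1) as [r0|n]; [|lra].
      eexists; reflexivity.
    + apply derivable_continuous_pt. exists (f u). apply RiemannInt_P28. exact Hu.
Qed.

Lemma seg_nonneg al be t s : 0 <= al -> 0 <= al - t * be -> 0 < s < t -> 0 <= al - s * be.
Proof.
  intros. destruct (Rle_dec 0 be); nra.
Qed.

Lemma seg_InT x y lam mu t s : InT x y -> InT (x - t * lam) (y - t * mu) -> 0 < s < t ->
  InT (x - s * lam) (y - s * mu).
Proof.
  unfold InT. intros H1 H2 Hs.
  assert (A1 := seg_nonneg y mu t s ltac:(lra) ltac:(lra) Hs).
  assert (A2 := seg_nonneg (x - y) (lam - mu) t s ltac:(lra) ltac:(nra) Hs).
  assert (A3 := seg_nonneg (1 - x) (- lam) t s ltac:(lra) ltac:(nra) Hs).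
  nra.
Qed.

Lemma transport lam mu k f x y t : char_sol lam mu k f ->
  (forall x y, InT x y -> f x y = 0) -> 0 <= t -> InT x y ->
  InT (x - t * lam) (y - t * mu) -> k x y = k (x - t * lam) (y - t * mu).
Proof.
  intros Hc Hf Ht H1 H2.
  assert (E := int_zero_val _ _ _ Ht (fun s Hs => Hf _ _ (seg_InT x y lam mu t s H1 H2 Hs))
    (Hc x y t Ht H1 H2)).
  lra.
Qed.

Lemma rsum_cont (g : R -> nat -> R) m u :
  (forall j, (j < m)%nat -> continuity_pt (fun y => g y j) u) ->
  continuity_pt (fun y => rsum m (g y)) u.
Proof.
  induction m as [|m IH]; intros H; simpl.
  - apply continuity_pt_const. intros a b; reflexivity.
  - apply (continuity_pt_plus (fun y => rsum m (g y)) (fun y => g y m)).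
    + apply IH. intros j Hj. apply H. lia.
    + apply H. lia.
Qed.
Lemma cont_comp (V : R -> R) (phi : R -> R -> R) c C :
  (forall u, 0 <= u <= 1 -> continuity_pt V u) ->
  (forall x y, InT x y -> 0 <= phi x y <= 1) -> 0 < C ->
  (forall x y x' y', Rabs (phi x' y' - phi x y) <= C * (Rabs (x' - x) + Rabs (y' - y))) ->
  cont_on_T (fun x y => c * V (phi x y)).
Proof.
  intros HV Hp HC HL x y Hxy e He.
  assert (He' : 0 < e / (Rabs c + 1)).
  { apply Rdiv_lt_0_compat; auto. pose proof (Rabs_pos c); lra. }
  destruct (HV _ (Hp _ _ Hxy) _ He') as [alp [Halp H]].
  exists (alp / (2 * C)). split.
  { apply Rdiv_lt_0_compat; lra. }
  intros x' y' H' Hx Hy.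
  assert (Hd : Rabs (phi x' y' - phi x y) < alp).
  { eapply Rle_lt_trans. apply HL.
    assert (alp / (2 * C) * C = alp / 2) by (field; lra). nra. }
  assert (Hv : Rabs (V (phi x' y') - V (phi x y)) < e / (Rabs c + 1)).
  { destruct (Req_dec (phi x' y') (phi x y)) as [Eq|Ne].
    - rewrite Eq, Rminus_diag, Rabs_R0. exact He'.
    - apply (H (phi x' y')). split. split. exact I. auto. exact Hd. }
  rewrite <- Rmult_minus_distr_l, Rabs_mult.
  pose proof (Rabs_pos c).
  assert (Rabs c * Rabs (V (phi x' y') - V (phi x y)) <= Rabs c * (e / (Rabs c + 1))) by nra.
  assert (Rabs c * (e / (Rabs c + 1)) < e).
  { apply (Rmult_lt_reg_r (Rabs c + 1)). lra. field_simplify; lra. }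
  lra.
Qed.

Lemma Rmax_lip p q : Rabs (Rmax p 0 - Rmax q 0) <= Rabs (p - q).
Proof.
  unfold Rmax. destruct (Rle_dec p 0), (Rle_dec q 0);
  unfold Rabs; repeat destruct Rcase_abs; lra.
Qed.
Lemma diag_zero lam mu k : 0 < lam -> 0 < mu ->
  char_sol lam (- mu) k (fun _ _ => 0) -> (forall x, 0 <= x <= 1 -> k x x = 0) ->
  forall x y, InT x y -> k x y = 0.
Proof.
  intros Hl Hm Hc Hd x y Hxy.
  set (t := (x - y) / (lam + mu)).
  assert (Et : t * (lam + mu) = x - y) by (unfold t; field; lra).
  assert (Ht : 0 <= t) by (unfold t; unfold InT in Hxy; apply Rmult_le_pos; [lra| left; apply Rinv_0_lt_compat; lra]).
  unfold InT in Hxy.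
  assert (E2 : y - t * - mu = x - t * lam) by lra.
  assert (Hin : InT (x - t * lam) (y - t * - mu)).
  { rewrite E2. unfold InT. nra. }
  rewrite (transport lam (- mu) k (fun _ _ => 0) x y t Hc (fun _ _ _ => eq_refl) Ht Hxy Hin).
  rewrite E2. apply Hd. nra.
Qed.

Lemma lip_lin p q r : 0 <= r -> Rabs (p - r * q) <= Rabs p + r * Rabs q.
Proof.
  intros Hr. unfold Rminus. eapply Rle_trans. apply Rabs_triang.
  rewrite Rabs_Ropp, Rabs_mult, (Rabs_pos_eq r Hr). lra.
Qed.

Lemma cont_zero : cont_on_T (fun _ _ => 0).
Proof.
  intros x y _ e He. exists 1. split. lra. intros. rewrite Rminus_diag, Rabs_R0. exact He.
Qed.
Theorem lemma2 (eps y0 : R) (n : nat) (A : nat -> nat -> R) (B G0 : nat -> R)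
  (G1 : R -> nat -> R) :
  0 < eps -> -1 < y0 < 0 ->
  Gamma1_sol n A G0 (eps1 eps y0) G1 ->
  (exists k11 k12 c11 c12 : R -> R -> R,
      is_solution eps y0 n B G1 k11 k12 c11 c12) /\
  (forall k11 k12 c11 c12 k11' k12' c11' c12' : R -> R -> R,
      is_solution eps y0 n B G1 k11 k12 c11 c12 ->
      is_solution eps y0 n B G1 k11' k12' c11' c12' ->
      forall x y, InT x y ->
        k11 x y = k11' x y /\ k12 x y = k12' x y /\
        c11 x y = c11' x y /\ c12 x y = c12' x y).
Proof.
  intros Heps Hy0 [dG1 [HG0 HD]].
  assert (He : 0 < Defs.eps2 eps y0 < eps1 eps y0).
  { unfold eps1, Defs.eps2. split.
    - apply Rdiv_lt_0_compat; auto. apply pow_lt. lra.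
    - unfold Rdiv. apply Rmult_lt_compat_l; auto. apply Rinv_lt_contravar.
      + apply Rmult_lt_0_compat; apply pow_lt; lra.
      + simpl. nra. }
  set (e1 := eps1 eps y0) in *. set (e2 := Defs.eps2 eps y0) in *.
  assert (Hs : 0 < sqrt e2 < sqrt e1).
  { split. apply sqrt_lt_R0; lra. apply sqrt_lt_1; lra. }
  set (s1 := sqrt e1) in *. set (s2 := sqrt e2) in *.
  set (Iext := fun y => s1 * 0 + s2 * 0 - rsum n (fun j => G1 y j * B j)).
  assert (HC : forall x, 0 <= x <= 1 -> continuity_pt Iext x).
  { intros u Hu. unfold Iext.
    apply (continuity_pt_minus (fun _ => s1 * 0 + s2 * 0) (fun y => rsum n (fun j => G1 y j * B j))).
    - apply continuity_pt_const. intros p q; reflexivity.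
    - apply (rsum_cont (fun y j => G1 y j * B j)). intros j Hj.
      apply (continuity_pt_mult (fun y => G1 y j) (fun _ => B j)).
      + apply derivable_continuous_pt. exists (dG1 u j). apply (HD j Hj u Hu).
      + apply continuity_pt_const. intros p q; reflexivity. }
  destruct (prim_facts Iext HC) as [V [V0 HV]].
  set (al := acoef y0 * e2 / (e1 * (acoef y0 * e2 + sqrt (e1 * e2)))).
  set (be := 1 / (acoef y0 * e2 + sqrt (e1 * e2))).
  assert (Form : forall k11 k12 c11 c12, is_solution eps y0 n B G1 k11 k12 c11 c12 ->
     forall x y, InT x y -> k11 x y = al * V (x - y) /\
        k12 x y = be * V (Rmax (x - y * s1 / s2) 0) /\ c11 x y = 0 /\ c12 x y = 0).
  { intros k11 k12 c11 c12 HS.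
    unfold is_solution in HS. cbv zeta in HS.
    fold e1 e2 s1 s2 al be in HS.
    destruct HS as [Ck11 [Ck12 [Cc11 [Cc12 [Hk11 [Hk12 [Hc11 [Hc12 [Hbd Hdiag]]]]]]]]].
    assert (Z11 : forall x y, InT x y -> c11 x y = 0).
    { apply (diag_zero s1 s1); try lra. exact Hc11. intros x Hx. apply (Hdiag x Hx). }
    assert (Z12 : forall x y, InT x y -> c12 x y = 0).
    { apply (diag_zero s1 s2); try lra. exact Hc12. intros x Hx. apply (Hdiag x Hx). }
    assert (Bd : forall u, 0 <= u <= 1 -> k11 u 0 = al * V u /\ k12 u 0 = be * V u).
    { intros u Hu. destruct (Hbd u Hu) as [v [Hv [E1 E2]]].
      assert (Ev : v = V u).
      { apply (int_uniq _ _ u v (V u) (proj1 Hu) Hv (proj1 (HV u Hu))).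
        intros s Hs0. unfold Iext. cbv beta.
        rewrite (Z11 s 0), (Z12 s 0) by (unfold InT; lra). reflexivity. }
      subst v. split; assumption. }
    intros x y Hxy. split; [|split; [|split]].
    - assert (E1 : x - y / s1 * s1 = x - y) by (field; lra).
      assert (E2 : y - y / s1 * s1 = 0) by (field; lra).
      assert (Ht : 0 <= y / s1).
      { unfold InT in Hxy. apply Rmult_le_pos; [lra| left; apply Rinv_0_lt_compat; lra]. }
      assert (Hin : InT (x - y / s1 * s1) (y - y / s1 * s1)).
      { rewrite E1, E2. unfold InT in *. lra. }
      rewrite (transport s1 s1 k11 c11 x y (y / s1) Hk11 Z11 Ht Hxy Hin).
      rewrite E1, E2. apply Bd. unfold InT in *; lra.
    - unfold InT in Hxy.
      destruct (Rle_dec (y * s1) (x * s2)) as [Hc|Hc].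
      + assert (E1 : x - y / s2 * s1 = x - y * s1 / s2) by (field; lra).
        assert (E2 : y - y / s2 * s2 = 0) by (field; lra).
        assert (Ht : 0 <= y / s2).
        { apply Rmult_le_pos; [lra| left; apply Rinv_0_lt_compat; lra]. }
        assert (Hq : y * s1 / s2 <= x).
        { replace x with (x * s2 / s2) by (field; lra).
          unfold Rdiv. apply Rmult_le_compat_r; auto. left; apply Rinv_0_lt_compat; lra. }
        assert (Hq2 : 0 <= y * s1 / s2).
        { apply Rmult_le_pos; [nra| left; apply Rinv_0_lt_compat; lra]. }
        assert (Hin : InT (x - y / s2 * s1) (y - y / s2 * s2)).
        { rewrite E1, E2. unfold InT in *. lra. }
        rewrite (transport s1 s2 k12 c12 x y (y / s2) Hk12 Z12 Ht ltac:(unfold InT; lra) Hin).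
        rewrite E1, E2, Rmax_left by lra. apply Bd. lra.
      + set (t := (x - y) / (s1 - s2)).
        assert (Et : t * (s1 - s2) = x - y) by (unfold t; field; lra).
        assert (Ht : 0 <= t) by (unfold t; apply Rmult_le_pos; [lra| left; apply Rinv_0_lt_compat; lra]).
        assert (E2 : y - t * s2 = x - t * s1) by lra.
        assert (Hm' : (x - t * s1) * (s1 - s2) = y * s1 - x * s2).
        { replace ((x - t * s1) * (s1 - s2)) with (x * (s1 - s2) - s1 * (t * (s1 - s2))) by ring.
          rewrite Et. ring. }
        assert (Hm : 0 <= x - t * s1).
        { destruct (Rle_dec 0 (x - t * s1)) as [|Hn]; auto. apply Rnot_le_lt in Hn. apply Rnot_le_lt in Hc. nra. }
        assert (Hts : 0 <= t * s1) by (apply Rmult_le_pos; lra).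
        assert (Hin : InT (x - t * s1) (y - t * s2)).
        { rewrite E2. unfold InT. lra. }
        rewrite (transport s1 s2 k12 c12 x y t Hk12 Z12 Ht ltac:(unfold InT; lra) Hin).
        rewrite E2, (proj1 (Hdiag (x - t * s1) ltac:(lra))).
        assert (Hq : x < y * s1 / s2).
        { replace x with (x * s2 / s2) by (field; lra).
          unfold Rdiv. apply Rmult_lt_compat_r. apply Rinv_0_lt_compat; lra. lra. }
        rewrite Rmax_right by lra. rewrite V0. ring.
    - apply Z11; auto.
    - apply Z12; auto. }
  split.
  - exists (fun x y => al * V (x - y)), (fun x y => be * V (Rmax (x - y * s1 / s2) 0)),
      (fun _ _ => 0), (fun _ _ => 0).
    unfold is_solution. cbv zeta. fold e1 e2 s1 s2 al be.
    split; [|split; [|split; [|split; [|split; [|split; [|split; [|split; [|split]]]]]]]].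
    + apply (cont_comp V (fun x y => x - y) al 1); try lra.
      * intros u Hu; apply HV; auto.
      * intros x y Hxy; unfold InT in Hxy; lra.
      * intros x y x' y'.
        replace (x' - y' - (x - y)) with ((x' - x) - 1 * (y' - y)) by ring.
        pose proof (lip_lin (x' - x) (y' - y) 1 ltac:(lra)). lra.
    + apply (cont_comp V (fun x y => Rmax (x - y * s1 / s2) 0) be (1 + s1 / s2)).
      * intros u Hu; apply HV; auto.
      * intros x y Hxy; unfold InT in Hxy. split. apply Rmax_r.
        apply Rmax_lub; [|lra].
        assert (0 <= y * s1 / s2).
        { apply Rmult_le_pos; [nra| left; apply Rinv_0_lt_compat; lra]. }
        lra.
      * assert (0 < s1 / s2) by (apply Rdiv_lt_0_compat; lra). lra.
      * intros x y x' y'. eapply Rle_trans. apply Rmax_lip.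
        assert (0 < s1 / s2) by (apply Rdiv_lt_0_compat; lra).
        replace (x' - y' * s1 / s2 - (x - y * s1 / s2)) with ((x' - x) - s1 / s2 * (y' - y)) by (field; lra).
        pose proof (lip_lin (x' - x) (y' - y) (s1 / s2) ltac:(lra)).
        pose proof (Rabs_pos (x' - x)). pose proof (Rabs_pos (y' - y)). nra.
    + apply cont_zero.
    + apply cont_zero.
    + intros x y t Ht H1 H2. cbv beta.
      replace (x - t * s1 - (y - t * s1)) with (x - y) by ring.
      rewrite Rminus_diag. apply int_zero.
    + intros x y t Ht H1 H2. cbv beta.
      replace (x - t * s1 - (y - t * s2) * s1 / s2) with (x - y * s1 / s2) by (field; lra).
      rewrite Rminus_diag. apply int_zero.
    + intros x y t Ht H1 H2. cbv beta. rewrite Rminus_diag. apply int_zero.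
    + intros x y t Ht H1 H2. cbv beta. rewrite Rminus_diag. apply int_zero.
    + intros x Hx. exists (V x). split; [|split].
      * exact (proj1 (HV x Hx)).
      * rewrite Rminus_0_r. reflexivity.
      * rewrite Rmax_left.
        -- f_equal. f_equal. unfold Rdiv. ring.
        -- unfold Rdiv. rewrite Rmult_0_l, Rmult_0_l. lra.
    + intros x Hx. split; [|split; reflexivity].
      assert (x - x * s1 / s2 <= 0).
      { assert (x <= x * s1 / s2); [|lra].
        replace x with (x * s2 / s2) at 1 by (field; lra).
        unfold Rdiv. apply Rmult_le_compat_r. left; apply Rinv_0_lt_compat; lra. nra. }
      rewrite Rmax_right by lra. rewrite V0. ring.
  - intros k11 k12 c11 c12 k11' k12' c11' c12' HS HS' x y Hxy.
    destruct (Form _ _ _ _ HS x y Hxy) as [A1 [A2 [A3 A4]]].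
    destruct (Form _ _ _ _ HS' x y Hxy) as [B1 [B2 [B3 B4]]].
    rewrite A1, A2, A3, A4, B1, B2, B3, B4. auto.
Qed.
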